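(* Let $K$ be a convex body in $\mathbb{R}^d$ and let $x,x'$ be regular boundary points of $K$ with exterior normal unit vectors $\xi,\xi'$ respectively. If $\xi\neq\xi'$, then the sets $-S(K,-\xi)+x$ and $-S(K,-\xi')+x'$ are disjoint.
   Context: A convex body is a compact convex set with nonempty interior. A boundary point is regular if $K$ has a unique support hyperplane there; its exterior normal unit vector $\xi$ satisfies $K\subset\{z:\langle z,\xi\rangle\le\langle x,\xi\rangle\}$. For a unit vector $\eta$, $S(K,\eta)$ is the set of points of $K$ maximizing $\langle\cdot,\eta\rangle$. *)

(* Defs.v *)
From HB Require Import structures.
From mathcomp Require Import all_boot all_order all_algebra.
From mathcomp Require Import all_classical all_reals all_analysis.
Set Implicit Arguments. Unset Strict Implicit. Unset Printing Implicit Defensive.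
Import Order.TTheory GRing.Theory Num.Theory.
Import numFieldNormedType.Exports.
Local Open Scope classical_set_scope.
Local Open Scope ring_scope.

Definition dotv (R : realType) (d : nat) (u v : 'rV[R]_d) : R :=
  \sum_(i < d) u ord0 i * v ord0 i.

Definition unit_vec (R : realType) (d : nat) (u : 'rV[R]_d) : Prop :=
  dotv u u = 1.

Definition convex_in (R : realType) (d : nat) (K : set 'rV[R]_d) : Prop :=
  forall x y (t : R), K x -> K y -> 0 <= t -> t <= 1 -> K (t *: x + (1 - t) *: y).

(* compact convex set with nonempty interior (topology of 'rV[R]_d is the
   product topology, i.e. the Euclidean one) *)
Definition convex_body (R : realType) (d : nat) (K : set 'rV[R]_d) : Prop :=
  compact K /\ convex_in K /\ (interior K !=set0).

Definition boundary_point (R : realType) (d : nat) (K : set 'rV[R]_d) x : Prop :=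
  K x /\ ~ (interior K) x.

Definition supp_normal (R : realType) (d : nat) (K : set 'rV[R]_d) x u : Prop :=
  u != 0 /\ forall z, K z -> dotv z u <= dotv x u.

Definition hyperplane_through (R : realType) (d : nat) (x u : 'rV[R]_d) :=
  [set z | dotv z u = dotv x u].

Definition regular_point (R : realType) (d : nat) (K : set 'rV[R]_d) x : Prop :=
  boundary_point K x /\
  forall u v, supp_normal K x u -> supp_normal K x v ->
    hyperplane_through x u = hyperplane_through x v.

Definition exterior_normal (R : realType) (d : nat) (K : set 'rV[R]_d) x xi : Prop :=
  unit_vec xi /\ forall z, K z -> dotv z xi <= dotv x xi.

Definition supp_set (R : realType) (d : nat) (K : set 'rV[R]_d) (eta : 'rV[R]_d) :=
  [set y | K y /\ forall z, K z -> dotv z eta <= dotv y eta].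

(* Main.v *)
Require Import Defs.
From HB Require Import structures.
From mathcomp Require Import all_boot all_order all_algebra.
From mathcomp Require Import all_classical all_reals all_analysis.
From mathcomp Require Import lra.
Import Order.TTheory GRing.Theory Num.Theory.
Import numFieldNormedType.Exports.
Local Open Scope classical_set_scope.
Local Open Scope ring_scope.

Set Implicit Arguments.
Section D.
Context {R : realType} {d : nat}.
Implicit Types u v w : 'rV[R]_d.

Lemma dotvC u v : dotv u v = dotv v u.
Proof. by apply: eq_bigr => i _; rewrite mulrC. Qed.
Lemma dotvDl u v w : dotv (u + v) w = dotv u w + dotv v w.
Proof. by rewrite /dotv -big_split; apply: eq_bigr => i _; rewrite mxE mulrDl. Qed.
Lemma dotvZl (a : R) u w : dotv (a *: u) w = a * dotv u w.
Proof. by rewrite /dotv mulr_sumr; apply: eq_bigr => i _; rewrite mxE mulrA. Qed.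
Lemma dotvNl u w : dotv (- u) w = - dotv u w.
Proof. by rewrite -scaleN1r dotvZl mulN1r. Qed.
Lemma dotvBl u v w : dotv (u - v) w = dotv u w - dotv v w.
Proof. by rewrite dotvDl dotvNl. Qed.
Lemma dotvDr u v w : dotv w (u + v) = dotv w u + dotv w v.
Proof. by rewrite dotvC dotvDl !(dotvC w). Qed.
Lemma dotvZr (a : R) u w : dotv w (a *: u) = a * dotv w u.
Proof. by rewrite dotvC dotvZl dotvC. Qed.
Lemma dotvNr u w : dotv w (- u) = - dotv w u.
Proof. by rewrite dotvC dotvNl dotvC. Qed.
Lemma dotvBr u v w : dotv w (u - v) = dotv w u - dotv w v.
Proof. by rewrite dotvDr dotvNr. Qed.
Lemma dotv_eq0 u : dotv u u = 0 -> u = 0.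
Proof.
move=> /eqP; rewrite /dotv psumr_eq0; last by move=> i _; rewrite -expr2 sqr_ge0.
move=> /allP H; apply/rowP => j; rewrite mxE.
have := H j (mem_index_enum _); rewrite /= mulf_eq0 orbb => /eqP <-.
by [] || by rewrite ord1.
Qed.
End D.
Lemma interior_step (R : realType) (d : nat) (K : set 'rV[R]_d) p v :
  interior K p -> exists2 t : R, 0 < t & K (p + t *: v).
Proof.
move=> /nbhs_ballP [e e0 sub].
exists (e / (2 * (`|v| + 1))).
  by rewrite divr_gt0 // mulr_gt0 // ltr_wpDl.
apply: sub; rewrite -ball_normE /= opprD addrA subrr add0r normrN normrZ.
rewrite ger0_norm; last by rewrite divr_ge0 ?ltW // mulr_ge0 // addr_ge0.
rewrite mulrAC ltr_pdivrMr; last by rewrite mulr_gt0 // ltr_wpDl.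
idtac.
rewrite ltr_pM2l //; have := normr_ge0 v; lra.
Qed.

Theorem lemma4p5 (R : realType) (d : nat) (K : set 'rV[R]_d)
    (x x' xi xi' : 'rV[R]_d) :
  convex_body K ->
  regular_point K x -> regular_point K x' ->
  exterior_normal K x xi -> exterior_normal K x' xi' ->
  xi <> xi' ->
  [set - y + x | y in supp_set K (- xi)] `&`
  [set - y + x' | y in supp_set K (- xi')] = set0.
Proof.
move=> [_ [_ [p Kp]]] [[Kx _] _] [[Kx' _] reg'] [u1 Nx] [u2 Nx'] neq.
rewrite /unit_vec in u1 u2.
apply/seteqP; split=> // z [[y [Ky Hy] <-]] [y' [Ky' Hy'] E].
have E2 : x' = x + y' - y.
  by rewrite -[x'](addNKr y') E [RHS]addrC addrCA [x + y']addrC.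
have h1 := Nx x' Kx'.
have h2 := Hy y' Ky'; rewrite !dotvNr lerN2 in h2.
have ex : dotv x' xi = dotv x xi.
  by apply/eqP; rewrite eq_le h1 /= E2 dotvBl dotvDl -addrA lerDl subr_ge0.
have xi0 : forall w : 'rV[R]_d, dotv w w = 1 -> w != 0.
  move=> w h; apply/negP => /eqP w0; move: h; rewrite w0 /dotv big1; last by move=> i _; rewrite mxE mul0r.
  by move/esym/eqP; rewrite oner_eq0.
have sn1 : supp_normal K x' xi by split; [exact: xi0 | by move=> w Kw; rewrite ex; apply: Nx].
have sn2 : supp_normal K x' xi' by split; [exact: xi0 | exact: Nx'].
have H := reg' _ _ sn1 sn2.
set c := dotv xi' xi.
have memH : forall w : 'rV[R]_d, dotv w xi = dotv x' xi -> dotv w xi' = dotv x' xi'.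
  move=> w hw; have : hyperplane_through x' xi w by [].
  by rewrite H.
have c1 : c * c = 1.
  have h := memH (x' + xi' - c *: xi).
  rewrite !dotvBl !dotvDl !dotvZl -/c u1 u2 (dotvC xi xi') -/c in h.
  have := h ltac:(lra); nra.
have : (c - 1) * (c + 1) = 0 by rewrite mulrDr !mulrBl c1; lra.
move/eqP; rewrite mulf_eq0 => /orP [|] /eqP hc.
- apply: neq; apply/eqP; rewrite -subr_eq0; apply/eqP; apply: dotv_eq0.
  rewrite !dotvBl !dotvBr u1 u2 (dotvC xi xi') -/c; lra.
- have e0 : xi' = - xi.
    apply/eqP; rewrite -subr_eq0 opprK; apply/eqP; apply: dotv_eq0.
    rewrite !dotvDl !dotvDr u1 u2 (dotvC xi xi') -/c; lra.
  have [t t0 Kt] := interior_step xi Kp.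
  have a1 := Nx' _ Kt; have a2 := Nx' _ (interior_subset Kp).
  have a3 : dotv (p + t *: xi) xi <= dotv x' xi by rewrite ex; apply: Nx.
  have a4 : dotv p xi <= dotv x' xi by rewrite ex; apply: Nx; exact: interior_subset.
  move: a1 a2; rewrite e0 !dotvNr !dotvDl dotvZl u1 mulr1 !lerN2 => a1 a2.
  move: a3; rewrite dotvDl dotvZl u1 mulr1 => a3.
  clear -a2 a3 t0; lra.
Qed.
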